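(* In the Setting, it cannot hold simultaneously that $r=\sqrt{K^2-\lambda_2V}$, $r+s=-\sqrt{K^2-\lambda_2V}$, $s=-\sqrt{K-\lambda_1}$, $f_1=0$, $g_1=f-c+1$, $g_2=c-1$ and $f_2=g-c$.
   Context: Setting: $\Gamma$ is a primitive strongly regular graph with parameters $(v,k,\lambda,\mu)$ (a $k$-regular graph on $v$ vertices, any two adjacent vertices having $\lambda$ and any two distinct non-adjacent vertices having $\mu$ common neighbours; primitive means $\Gamma$ and its complement are connected), with spectrum $k^1, r^f, s^g$ where $k>r>s$ and exponents are multiplicities. $C$ is a coclique in $\Gamma$ of size $c=\frac{vs}{s-k}$. A $K$-regular graph on $V$ vertices, neither complete nor edgeless, is a divisible design graph with parameters $(V,K,\lambda_1,\lambda_2;m,n)$ if its vertex set can be partitioned into $m$ canonical classes of size $n$ such that two distinct vertices in the same class have exactly $\lambda_1$ common neighbours and two vertices in different classes have exactly $\lambda_2$ common neighbours; it is proper unless $m=1$, $n=1$ or $\lambda_1=\lambda_2$. It is assumed that the subgraph $\Delta$ induced on $V(\Gamma)\setminus C$ is a proper divisible design graph with parameters $(V,K,\lambda_1,\lambda_2;m,n)$. Let $A$ be the adjacency matrix of $\Delta$, $W$ the space of vectors constant on each canonical class and $\mathbf{1}$ the all-ones vector. It is known that $A$ acts on $W^\perp$ with eigenvalues $\pm\sqrt{K-\lambda_1}$, whose multiplicities are denoted $f_1$ (for $+$) and $f_2$ (for $-$), with $f_1+f_2=m(n-1)$, and on $W\cap\mathbf{1}^\perp$ with eigenvalues $\pm\sqrt{K^2-\lambda_2V}$,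 with multiplicities $g_1$ (for $+$) and $g_2$ (for $-$), $g_1+g_2=m-1$. It is also known that the spectrum of $\Delta$ is $(k+s)^1, r^{f-c+1}, (r+s)^{c-1}, s^{g-c}$, with $c<g$. *)

(* Defs.v *)
From HB Require Import structures.
From mathcomp Require Import all_boot all_order all_algebra.
From mathcomp Require Import reals.
Set Implicit Arguments. Unset Strict Implicit. Unset Printing Implicit Defensive.
Import Order.TTheory GRing.Theory Num.Theory.
Local Open Scope ring_scope.

Section Graphs.
Variable T : finType.
Variable e : rel T.

Definition simple_graph := symmetric e /\ irreflexive e.

Definition compl_rel : rel T := fun x y => (x != y) && ~~ e x y.

Definition connected_rel (r : rel T) := forall x y : T, connect r x y.

Definition cnbrs (D : {set T}) (x y : T) : {set T} :=
  [set z in D | e x z && e y z].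

Definition nbrs (D : {set T}) (x : T) : {set T} := [set z in D | e x z].

Definition srg (v k lam mu : nat) :=
  [/\ simple_graph, #|T| = v,
      (forall x, #|nbrs setT x| = k),
      (forall x y, x != y -> e x y -> #|cnbrs setT x y| = lam) &
      (forall x y, x != y -> ~~ e x y -> #|cnbrs setT x y| = mu)].

Definition primitive := connected_rel e /\ connected_rel compl_rel.

Definition coclique (C : {set T}) :=
  forall x y, x \in C -> y \in C -> ~~ e x y.

(* The subgraph induced on D is a divisible design graph with parameters
   (V,K,lam1,lam2;m,n) whose canonical classes form the partition P of D. *)
Definition is_ddg (D : {set T}) (P : {set {set T}})
    (V K lam1 lam2 m n : nat) :=
  [/\ #|D| = V,
      (forall x, x \in D -> #|nbrs D x| = K),
      (exists x y, [/\ x \in D, y \in D & e x y]) &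
      (exists x y, [/\ x \in D, y \in D, x != y & ~~ e x y]) ] /\
  [/\ partition P D,
      #|P| = m,
      (forall B, B \in P -> #|B| = n),
      (forall B x y, B \in P -> x \in B -> y \in B -> x != y ->
          #|cnbrs D x y| = lam1) &
      (forall B x y, B \in P -> x \in B -> y \in D -> y \notin B ->
          #|cnbrs D x y| = lam2)].

Definition proper_ddg (lam1 lam2 m n : nat) :=
  [/\ m != 1%N, n != 1%N & lam1 != lam2].

Section Mx.
Variable R : fieldType.

Definition adjmx (D : {set T}) : 'M[R]_#|D| :=
  \matrix_(i, j) (e (enum_val i) (enum_val j))%:R.

Definition indvec (D B : {set T}) : 'rV[R]_#|D| :=
  \row_j ((enum_val j \in B)%:R).

(* W : the space of vectors constant on each canonical class *)
Definition Wsp (D : {set T}) (P : {set {set T}}) : 'M[R]_#|D| :=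
  (\sum_(B in P) <<indvec D B>>)%MS.

Definition orthmx (N : nat) (M : 'M[R]_N) : 'M[R]_N := kermx M^T.

Definition onesperp (N : nat) : 'M[R]_N := kermx (const_mx 1 : 'M[R]_(N, 1)).

Definition mult_on (N : nat) (U A : 'M[R]_N) (a : R) : nat :=
  \rank (U :&: eigenspace A a)%MS.

End Mx.
End Graphs.

(* The multiplicities f1, f2 (of +-sqrt(K-lam1) on W^perp) and g1, g2
   (of +-sqrt(K^2-lam2 V) on W \cap 1^perp) of the adjacency matrix A of the
   subgraph induced on D, W being determined by the partition P. *)
Definition ddg_theta1 (R : rcfType) (K lam1 : nat) : R :=
  Num.sqrt (K%:R - lam1%:R).
Definition ddg_theta2 (R : rcfType) (V K lam2 : nat) : R :=
  Num.sqrt (K%:R ^+ 2 - lam2%:R * V%:R).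

Definition ddg_f1 (R : rcfType) (T : finType) (e : rel T) (D : {set T})
    (P : {set {set T}}) (K lam1 : nat) : nat :=
  mult_on (orthmx (Wsp R D P)) (adjmx e R D) (ddg_theta1 R K lam1).
Definition ddg_f2 (R : rcfType) (T : finType) (e : rel T) (D : {set T})
    (P : {set {set T}}) (K lam1 : nat) : nat :=
  mult_on (orthmx (Wsp R D P)) (adjmx e R D) (- ddg_theta1 R K lam1).
Definition ddg_g1 (R : rcfType) (T : finType) (e : rel T) (D : {set T})
    (P : {set {set T}}) (V K lam2 : nat) : nat :=
  mult_on (Wsp R D P :&: onesperp R #|D|)%MS (adjmx e R D)
    (ddg_theta2 R V K lam2).
Definition ddg_g2 (R : rcfType) (T : finType) (e : rel T) (D : {set T})
    (P : {set {set T}}) (V K lam2 : nat) : nat :=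
  mult_on (Wsp R D P :&: onesperp R #|D|)%MS (adjmx e R D)
    (- ddg_theta2 R V K lam2).

(* Main.v *)
Require Import Defs.
From HB Require Import structures.
From mathcomp Require Import all_boot all_order all_algebra.
From mathcomp Require Import reals.
Import Order.TTheory GRing.Theory Num.Theory.
Local Open Scope ring_scope.
From mathcomp Require Import zify ring lra.

Lemma rankW_ge (R : numFieldType) (T : finType) (D : {set T}) (P : {set {set T}}) n :
  partition P D -> (forall B, B \in P -> #|B| = n) -> n != 0%N ->
  (#|P| <= \rank (Wsp R D P))%N.
Proof.
move=> /and3P[/eqP covP /trivIsetP triv _] szP n0.
pose X : 'M[R]_(#|P|, #|D|) := \matrix_(i < #|P|) indvec R D (enum_val i).
have XW : (X <= Wsp R D P)%MS.
  apply/row_subP => i; rewrite rowK.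
  by apply: (sumsmx_sup (enum_val i)); [exact: enum_valP | rewrite genmxE].
have XX : X *m X^T = n%:R *: 1%:M.
  apply/matrixP => i j; rewrite !mxE.
  under eq_bigr => k _ do rewrite !mxE -natrM mulnb.
  rewrite -natr_sum -(big_enum_val (fun x => ((x \in enum_val i) && (x \in enum_val j) : nat))).
  rewrite -big_mkcondr /= sum1_card.
  have Hi := enum_valP i; have Hj := enum_valP j.
  have sub : forall x, x \in enum_val i -> x \in D.
    by move=> x xB; rewrite -covP; apply/bigcupP; exists (enum_val i).
  case: (eqVneq i j) => [<-|ij].
    rewrite mulr1 -(szP _ Hi); congr (_%:R).
    apply: eq_card => x; rewrite -topredE /= andbb; apply/andP/idP => [[]//|xB].
    by split=> //; exact: sub.
  rewrite mulr0; apply/eqP; rewrite pnatr_eq0 -leqn0 leqNgt.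
  apply/negP => /card_gt0P[x]; rewrite -topredE /= => /and3P[_ xi xj].
  have : enum_val i != enum_val j by apply: contra ij => /eqP/enum_val_inj ->.
  by move=> /(triv _ _ Hi Hj) /disjointFr /(_ xi); rewrite xj.
have : \rank (X *m X^T) = #|P|.
  by rewrite XX mxrank_scale_nz ?mxrank1 // pnatr_eq0.
move=> <-; apply: leq_trans (mxrankM_maxl _ _) _; exact: mxrankS.
Qed.

Lemma theta01 (R : numFieldType) (T : finType) (e : rel T) (D : {set T})
  (P : {set {set T}}) V K lam1 lam2 m n (th : R) :
  irreflexive e -> is_ddg e D P V K lam1 lam2 m n -> n != 1%N ->
  (mult_on (orthmx (Wsp R D P)) (adjmx e R D) (- th) = m * (n - 1))%N ->
  exists b : bool, th = b%:R.
Proof.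
move=> irr [[_ _ [x0 [y0 [x0D _ _]]] _] [partP cardP szP _ _]] n1 Hmult.
have partP' := partP; move: partP' => /and3P[/eqP covP /trivIsetP triv set0P].
have : x0 \in cover P by rewrite covP.
move=> /bigcupP[B0 B0P x0B0].
have n2 : (1 < n)%N.
  have c0 : (0 < #|B0|)%N by apply/card_gt0P; exists x0.
  rewrite (szP _ B0P) in c0.
  by case: n c0 n1 {szP Hmult} => [|[|]].
have n0 : n != 0%N by case: n n2 {n1 Hmult szP}.
have cardD : #|D| = (m * n)%N.
  by rewrite (card_partition partP) (eq_bigr (fun=> n) szP) sum_nat_const cardP.
have rW := @rankW_ge R T D P n partP szP n0; rewrite cardP in rW.
set W := Wsp R D P in rW Hmult *.
set A := adjmx e R D in Hmult *.
set U := orthmx W in Hmult *.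
set E := eigenspace A (- th).
have rU : (\rank U <= m * (n - 1))%N.
  rewrite /U /orthmx mxrank_ker mxrank_tr.
  have -> : (m * (n - 1) = #|D| - m)%N by rewrite cardD mulnBr muln1.
  exact: leq_sub2l.
have UE : (U <= E)%MS.
  have sub := capmxSl U E.
  have : (U :&: E == U)%MS.
    rewrite -(mxrank_leqif_eq sub); apply/eqP.
    by apply/eqP; rewrite eqn_leq mxrankS //= ; move: Hmult; rewrite /mult_on => ->.
  move=> /eqmxP EQ; rewrite -EQ; exact: capmxSr.
have : (1 < #|B0|)%N by rewrite szP.
move=> /card_gt1P[x [y [xB yB xy]]].
have sub0 : forall z, z \in B0 -> z \in D.
  by move=> z zB; rewrite -covP; apply/bigcupP; exists B0.
have xD := sub0 _ xB; have yD := sub0 _ yB.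
pose ix := enum_rank_in x0D x; pose iy := enum_rank_in x0D y.
have ixK : enum_val ix = x by rewrite /ix enum_rankK_in.
have iyK : enum_val iy = y by rewrite /iy enum_rankK_in.
have ixy : ix != iy by apply: contra xy => /eqP ixy; rewrite -ixK -iyK ixy.
pose u : 'rV[R]_#|D| := delta_mx 0 ix - delta_mx 0 iy.
have uU : (u <= U)%MS.
  apply/sub_kermxP.
  have : (W <= kermx u^T)%MS.
    apply/sumsmx_subP => B BP; rewrite genmxE; apply/sub_kermxP.
    rewrite /u linearB /= !trmx_delta mulmxBr -!colE.
    apply/matrixP => i j; rewrite !mxE ixK iyK.
    suff -> : (x \in B) = (y \in B) by rewrite subrr.
    case: (eqVneq B B0) => [->|BB0]; first by rewrite xB yB.
    have dis := triv _ _ BP B0P BB0.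
    by rewrite (disjointFl dis xB) (disjointFl dis yB).
  by move=> /sub_kermxP H; rewrite -[u]trmxK -trmx_mul H trmx0.
have : (u <= E)%MS by apply: submx_trans UE.
move=> /eigenspaceP /matrixP /(_ 0 ix).
rewrite /u mulmxBl -!rowE !mxE ixK iyK irr eqxx (negbTE ixy) /=.
rewrite eqxx subr0 mulr1 sub0r.
by move=> /eqP; rewrite eqr_opp => /eqP <-; exists (e y x).
Qed.
Theorem mainTheorem4 (R : realType) (T : finType) (e : rel T)
    (v k lam mu : nat) (r s : R) (f g : nat) (C : {set T})
    (P : {set {set T}}) (V K lam1 lam2 m n : nat) :
  (* Gamma : primitive SRG(v,k,lam,mu) with spectrum k^1, r^f, s^g, k > r > s *)
  srg e v k lam mu -> primitive e ->
  s < r -> r < k%:R ->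
  char_poly (adjmx e R [set: T])
    = ('X - (k%:R)%:P) * ('X - r%:P) ^+ f * ('X - s%:P) ^+ g ->
  (* C : coclique of size c = v s / (s - k) *)
  coclique e C ->
  #|C|%:R = v%:R * s / (s - k%:R) ->
  (* Delta : the subgraph induced on V(Gamma) \ C is a proper DDG *)
  is_ddg e (~: C) P V K lam1 lam2 m n ->
  proper_ddg lam1 lam2 m n ->
  (* facts recorded as known in the Setting *)
  (ddg_f1 R e (~: C) P K lam1 + ddg_f2 R e (~: C) P K lam1 = m * (n - 1))%N ->
  (ddg_g1 R e (~: C) P V K lam2 + ddg_g2 R e (~: C) P V K lam2 = m - 1)%N ->
  char_poly (adjmx e R (~: C))
    = ('X - (k%:R + s)%:P) * ('X - r%:P) ^+ (f - #|C| + 1)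
      * ('X - (r + s)%:P) ^+ (#|C| - 1) * ('X - s%:P) ^+ (g - #|C|) ->
  (#|C| < g)%N ->
  (* conclusion *)
  ~ [/\ r = Num.sqrt (K%:R ^+ 2 - lam2%:R * V%:R),
        r + s = - Num.sqrt (K%:R ^+ 2 - lam2%:R * V%:R),
        s = - Num.sqrt (K%:R - lam1%:R),
        ddg_f1 R e (~: C) P K lam1 = 0%N &
        [/\ (ddg_g1 R e (~: C) P V K lam2)%:Z = f%:Z - #|C|%:Z + 1,
            (ddg_g2 R e (~: C) P V K lam2)%:Z = #|C|%:Z - 1 &
            (ddg_f2 R e (~: C) P K lam1)%:Z = g%:Z - #|C|%:Z]].
Proof.
Proof.
move=> [[_ irr] _ _ _ _] _ sr _ _ _ _ Hddg [_ n1 _] H12 _ _ _.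
move=> [rE rsE sE f10 [_ _ _]].
move: H12; rewrite f10 add0n => Hm.
have [b Hb] := @theta01 R T e (~: C) P V K lam1 lam2 m n _ irr Hddg n1 Hm.
rewrite /ddg_theta1 in Hb.
set z : R := K%:R ^+ 2 - lam2%:R * V%:R in rE rsE.
have r0 : 0 <= r by rewrite rE sqrtr_ge0.
have s2 : s = - (2 * r) by rewrite -rE in rsE; lra.
have rpos : 0 < r by lra.
have th1 : Num.sqrt (K%:R - lam1%:R) = 2 * r :> R by rewrite -[LHS]opprK -sE s2 opprK.
move: Hb; rewrite th1; case: b => /= Hb; last by lra.
have zpos : 0 <= z.
  rewrite leNgt; apply/negP => zn; move: rE; rewrite ltr0_sqrtr //; lra.
have : r ^+ 2 = z by rewrite rE sqr_sqrtr.
rewrite /z => Hz.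
have : ((4 * K ^ 2)%N%:R : R) = (4 * lam2 * V + 1)%N%:R.
  rewrite !natrD !natrM ?natrX /=.
  have r12 : r = 1/2 by lra.
  rewrite r12 expr2 in Hz.
  nra.
move=> /eqP; rewrite eqr_nat => /eqP H; lia.
Qed.
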